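(* Let $n\ge 2$ and let $(G(k))_{k\in\mathbb{N}}$ be a sequence of digraphs on $\mathcal{V}=\{1,\dots,n\}$ with knowledge sets evolving by the flooding update described in the context. Fix a node $w\in\mathcal{V}$. Suppose that for every $k\in\{0,1,\dots,n-2\}$ there exists an output-cord $\mathcal{O}^w(k)$ from node $w$ at time $k$ with $|\mathcal{O}^w(k)|\ge k+1$. Then for every $k\in\{0,1,\dots,n-2\}$, $|\{i\in\mathcal{V} : d_w\in\mathcal{K}_i(k+1)\}|\ge k+2$.
   Context: Network: $\mathcal{V}=\{1,\dots,n\}$; node $i$ holds initial data $d_i\in\mathbb{R}$, pairwise distinct. At discrete times $k\in\mathbb{N}$ communication follows digraph $G(k)=(\mathcal{V},\mathcal{E}(k))$; node $i$ sends to $j$ at time $k$ iff $(i,j)\in\mathcal{E}(k)$. Knowledge sets: $\mathcal{K}_i(0)=\{d_i\}$ and $\mathcal{K}_j(k+1)=\mathcal{K}_j(k)\cup\bigcup_{i:(i,j)\in\mathcal{E}(k)}\mathcal{K}_i(k)$. Output-cord: an output-cord from node $i$ at time $k$ is an ordered list $\mathcal{O}^i(k)=(\mathcal{O}^i_1,\dots,\mathcal{O}^i_m)$ of pairwise distinct nodes of $\mathcal{V}\setminus\{i\}$ such that $(\mathcal{O}^i_{j+1},\mathcal{O}^i_j)\in\mathcal{E}(k)$ for all $j\in\{1,\dots,m-1\}$ and $(i,\mathcal{O}^i_m)\in\mathcal{E}(k)$; its cardinality is $|\mathcal{O}^i(k)|=m$. *)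

(* Defs.v *)
From mathcomp Require Import all_boot all_order all_algebra.
From mathcomp Require Import reals.
Set Implicit Arguments. Unset Strict Implicit. Unset Printing Implicit Defensive.

(* Nodes are 'I_n (node i+1 of the paper is the ordinal i).
   The time-varying digraph is E : nat -> rel 'I_n, with
   (i, j) in E(k)  <->  E k i j  (node i sends to node j at time k). *)

Fixpoint know {R : eqType} {n : nat} (E : nat -> rel 'I_n) (d : 'I_n -> R)
  (k : nat) (j : 'I_n) : pred R :=
  match k with
  | 0 => fun x => x == d j
  | k'.+1 => fun x => know E d k' j x || [exists i, E k' i j && know E d k' i x]
  end.

(* s = [:: O_1; ...; O_m] is an output-cord from w at time k:
   pairwise distinct nodes of V \ {w}, (O_{j+1}, O_j) in E(k) for j < m,
   and (w, O_m) in E(k).  The edge conditions are exactly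
   path (E k) w [:: O_m; ...; O_1]. *)
Definition is_output_cord {n : nat} (E : nat -> rel 'I_n) (k : nat) (w : 'I_n)
  (s : seq 'I_n) : bool :=
  [&& uniq s, w \notin s & path (E k) w (rev s)].

(* Main.v *)
Require Import Defs.
From mathcomp Require Import all_boot all_order all_algebra.
From mathcomp Require Import reals.
From mathcomp Require Import zify.

Lemma path_exit (T : eqType) (e : rel T) (P : pred T) (p : seq T) (x : T) :
  path e x p -> P x -> ~~ all P p -> exists x' y, [&& e x' y, P x' & ~~ P y].
Proof.
elim: p x => [|a p IH] x //= /andP[exa pa] Px.
case Pa: (P a) => /=.
  by move=> H; apply: (IH a pa Pa H).
by move=> _; exists x, a; rewrite exa Px Pa.
Qed.

Theorem lemma2 (R : realType) (n : nat) (E : nat -> rel 'I_n) (d : 'I_n -> R)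
  (w : 'I_n) :
  (2 <= n)%N ->
  injective d ->
  (forall k : nat, (k <= n - 2)%N ->
     exists s : seq 'I_n, is_output_cord E k w s /\ (k + 1 <= size s)%N) ->
  forall k : nat, (k <= n - 2)%N ->
    (k + 2 <= #|[set i : 'I_n | know E d k.+1 i (d w)]|)%N.
Proof.
move=> n2 _ Hc.
pose S k := [set i : 'I_n | know E d k i (d w)].
have sub k : S k \subset S k.+1.
  by apply/subsetP => i; rewrite !inE /= => ->.
have step k x y : E k x y -> x \in S k -> y \in S k.+1.
  rewrite !inE /= => exy xS; apply/orP; right; apply/existsP; exists x.
  by rewrite exy.
have wS k : w \in S k.
  elim: k => [|k IH]; first by rewrite inE /=.
  exact: (subsetP (sub k)).
suff Q : forall k, (k <= n - 1)%N -> (k + 1 <= #|S k|)%N.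
  move=> k hk; have h : (k.+1 <= n - 1)%N by move: hk n2; clear; lia.
  by have := Q k.+1 h; rewrite -(addn1 k) -addnA.
elim=> [|k IH] hk.
  by rewrite add0n card_gt0; apply/set0Pn; exists w.
have hk2 : (k <= n - 2)%N by move: hk; clear; lia.
have {}IH := IH (leq_trans (leqnSn _) hk).
have [s [/and3P[us wns ps] sz]] := Hc k hk2.
case Hall: (all (mem (S k)) (rev s)).
  have H1 : (size (w :: s) <= #|S k|)%N.
    rewrite cardE; apply: uniq_leq_size; first by rewrite /= wns us.
    move=> x; rewrite inE mem_enum => /orP[/eqP->|xs]; first exact: wS.
    by move/allP: Hall; apply; rewrite mem_rev.
  apply: leq_trans (subset_leq_card (sub k)).
  move: H1 sz => /=; clear; lia.
have [x [y /and3P[exy xS yS]]] := @path_exit _ (E k) (mem (S k)) _ _ ps (wS k) (negbT Hall).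
have H2 : (#|y |: S k| <= #|S k.+1|)%N.
  apply: subset_leq_card; apply/subsetP => i; rewrite in_setU1 => /orP[/eqP->|].
    exact: step exy xS.
  exact: (subsetP (sub k)).
rewrite cardsU1 yS /= in H2.
apply: leq_trans H2; rewrite addn1 add1n ltnS. move: IH; rewrite addn1 => IH; apply: leq_trans IH _; apply: eq_leq; by apply: eq_card => i; rewrite !inE.
Qed.
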